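(* Let $G$ and $H$ be finitely generated groups acting transitively on sets $X$ and $Y$ respectively. If $\mathrm{Con}(G\curvearrowright X)=\mathrm{Con}(H\curvearrowright Y)$, then $|X|=|Y|$.
   Context: For an action $G\curvearrowright X$, an ordered tuple $\mathfrak{g}=(g_1,\dots,g_n)$ of elements of $G$ and a finite partition $\mathcal{E}=\{E_1,\dots,E_m\}$ of $X$ (a configuration pair), a configuration is a tuple $C=(C_0,\dots,C_n)\in\{1,\dots,m\}^{n+1}$ such that some $x\in E_{C_0}$ satisfies $g_i\cdot x\in E_{C_i}$ for $i=1,\dots,n$; the set of these is $\mathrm{Con}(\mathfrak{g},\mathcal{E};X)$. Then $\mathrm{Con}(G\curvearrowright X)=\{\mathrm{Con}(\mathfrak{g},\mathcal{E};X): (\mathfrak{g},\mathcal{E})\text{ a configuration pair}\}$. *)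

(* Defs.v *)
From Stdlib Require Import List Arith.
Import ListNotations.

Record Group := {
  carrier :> Type;
  gmul : carrier -> carrier -> carrier;
  ginv : carrier -> carrier;
  gone : carrier;
  gmulA : forall a b c, gmul a (gmul b c) = gmul (gmul a b) c;
  gmul1l : forall a, gmul gone a = a;
  gmulVl : forall a, gmul (ginv a) a = gone
}.

Inductive generated (G : Group) (S : list G) : G -> Prop :=
| gen_one : generated G S (gone G)
| gen_in : forall s, In s S -> generated G S s
| gen_mul : forall a b, generated G S a -> generated G S b -> generated G S (gmul G a b)
| gen_inv : forall a, generated G S a -> generated G S (ginv G a).

Definition finitely_generated (G : Group) : Prop :=
  exists S : list G, forall g : G, generated G S g.

Definition is_action (G : Group) (X : Type) (act : G -> X -> X) : Prop :=
  (forall x, act (gone G) x = x) /\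
  (forall g h x, act (gmul G g h) x = act g (act h x)).

Definition transitive (G : Group) (X : Type) (act : G -> X -> X) : Prop :=
  forall x y : X, exists g : G, act g x = y.

(* A finite partition {E_1,...,E_m} of X, encoded by the labelling
   E : X -> nat with E_k = {x | E x = k}; blocks are nonempty. *)
Definition is_partition (X : Type) (m : nat) (E : X -> nat) : Prop :=
  (forall x, 1 <= E x <= m) /\ (forall k, 1 <= k <= m -> exists x, E x = k).

Definition Con (G : Group) (X : Type) (act : G -> X -> X)
  (gs : list G) (E : X -> nat) : list nat -> Prop :=
  fun C => exists x : X, C = E x :: map (fun g => E (act g x)) gs.

Definition ConAct (G : Group) (X : Type) (act : G -> X -> X)
  : (list nat -> Prop) -> Prop :=
  fun S => exists (gs : list G) (m : nat) (E : X -> nat),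
    gs <> [] /\ is_partition X m E /\ (forall C, S C <-> Con G X act gs E C).

Definition ConAct_eq (G H : Group) (X Y : Type)
  (actG : G -> X -> X) (actH : H -> Y -> Y) : Prop :=
  forall S : list nat -> Prop,
    ConAct G X actG S <-> ConAct H Y actH S.

Definition same_card (X Y : Type) : Prop :=
  exists (f : X -> Y) (g : Y -> X),
    (forall x, g (f x) = x) /\ (forall y, f (g y) = y).

(* Main.v *)
Require Import Defs.
From Stdlib Require Import List Arith Lia Cantor Classical ClassicalEpsilon Wf_nat.
Import ListNotations.

Section Rank.
Variable X : Type.
Variable f : nat -> X.
Hypothesis fsurj : forall x, exists n, f n = x.

Definition newb (n : nat) : bool :=
  if excluded_middle_informative (forall k, k < n -> f k <> f n) then true else false.

Fixpoint cnt (n : nat) : nat :=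
  match n with 0 => 0 | S n' => cnt n' + (if newb n' then 1 else 0) end.

Lemma mi_ex (x : X) : exists n, f n = x /\ forall k, k < n -> f k <> x.
Proof.
  destruct (dec_inh_nat_subset_has_unique_least_element (fun n => f n = x))
    as [n [[H1 H2] _]].
  - intro n; apply classic.
  - apply fsurj.
  - exists n; split; auto. intros k Hk E. specialize (H2 k E). lia.
Qed.

Definition mi (x : X) : nat := proj1_sig (constructive_indefinite_description _ (mi_ex x)).

Lemma mi_spec x : f (mi x) = x /\ forall k, k < mi x -> f k <> x.
Proof. unfold mi. destruct constructive_indefinite_description; auto. Qed.

Definition rk (x : X) := cnt (mi x).

Lemma cnt_mono a b : a <= b -> cnt a <= cnt b.
Proof. induction 1; simpl; lia. Qed.

Lemma cnt_new a b : newb a = true -> a < b -> cnt a < cnt b.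
Proof. intros Hn Hab. pose proof (cnt_mono (S a) b Hab). simpl in H. rewrite Hn in H. lia. Qed.

Lemma newb_mi x : newb (mi x) = true.
Proof.
  unfold newb. destruct excluded_middle_informative as [_|n]; auto.
  exfalso; apply n. destruct (mi_spec x) as [H1 H2]. rewrite H1. auto.
Qed.

Lemma rk_inj x y : rk x = rk y -> x = y.
Proof.
  unfold rk; intro E.
  destruct (lt_eq_lt_dec (mi x) (mi y)) as [[L|L]|L].
  - pose proof (cnt_new _ _ (newb_mi x) L). lia.
  - destruct (mi_spec x) as [H1 _]; destruct (mi_spec y) as [H2 _].
    rewrite <- H1, <- H2, L; reflexivity.
  - pose proof (cnt_new _ _ (newb_mi y) L). lia.
Qed.

Lemma cnt_hit N k : k < cnt N -> exists n, n < N /\ newb n = true /\ cnt n = k.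
Proof.
  induction N; simpl; intro H; [lia|].
  destruct (Nat.lt_ge_cases k (cnt N)) as [L|L].
  - destruct (IHN L) as [n [? [? ?]]]. exists n; repeat split; auto.
  - destruct (newb N) eqn:E.
    + exists N; repeat split; auto; lia.
    + lia.
Qed.

Lemma rk_dc x k : k <= rk x -> exists y, rk y = k.
Proof.
  intro H. apply Nat.lt_eq_cases in H as [H|H]; [|eauto].
  unfold rk in H. destruct (cnt_hit _ _ H) as [n [_ [Hn Hc]]].
  exists (f n). unfold rk.
  assert (mi (f n) = n) as ->; auto.
  destruct (mi_spec (f n)) as [H1 H2].
  destruct (lt_eq_lt_dec (mi (f n)) n) as [[L|L]|L]; auto.
  - unfold newb in Hn. destruct excluded_middle_informative as [a|]; [|discriminate].
    exfalso; apply (a _ L); auto.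
  - exfalso; apply (H2 n L); auto.
Qed.
End Rank.

Definition inj {X} (r : X -> nat) := forall x y, r x = r y -> x = y.
Definition dc {X} (r : X -> nat) := forall x k, k <= r x -> exists y, r y = k.

Lemma r_exists (X : Type) :
  (exists f : nat -> X, forall x, exists n, f n = x) \/ (X -> False) ->
  exists r : X -> nat, inj r /\ dc r.
Proof.
  intros [[f Hf]|H].
  - exists (rk X f Hf). split; [exact (rk_inj X f Hf) | exact (rk_dc X f Hf)].
  - exists (fun _ => 0). split; intros x; destruct (H x).
Qed.

Lemma nodup_map_transfer {X} (E r : X -> nat) (l : list X) :
  inj r -> NoDup (map E l) -> NoDup (map r l).
Proof.
  intro Hi; induction l; simpl; intro H; constructor.
  - inversion H; subst. intro Hin. apply in_map_iff in Hin as [y [Hy Hyl]].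
    apply Hi in Hy; subst. apply H2. apply in_map; auto.
  - inversion H; auto.
Qed.

Lemma build_list {X} (E : X -> nat) m :
  (forall k, 1 <= k <= m -> exists x, E x = k) ->
  forall n, n <= m -> exists l : list X, map E l = seq 1 n.
Proof.
  intros Hs n; induction n; intro Hn.
  - exists []; reflexivity.
  - destruct IHn as [l Hl]; [lia|].
    destruct (Hs (S n)) as [x Hx]; [lia|].
    exists (l ++ [x]). rewrite map_app, Hl, seq_S. simpl. rewrite Hx. reflexivity.
Qed.

Lemma char {X} (r : X -> nat) : inj r -> dc r ->
  forall k, (exists x, r x = k) <-> exists E, is_partition X (S k) E.
Proof.
  intros Hi Hd k; split.
  - intros [x0 Hx0]. exists (fun x => S (Nat.min (r x) k)). split.
    + intro x; lia.
    + intros j Hj. destruct (Hd x0 (j - 1)) as [y Hy]; [lia|].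
      exists y. rewrite Hy. lia.
  - intros [E [Hb Hs]]. apply NNPP; intro Hno.
    assert (Hlt : forall x, r x < k).
    { intro x. destruct (Nat.lt_ge_cases (r x) k) as [L|L]; auto.
      exfalso; apply Hno. apply (Hd x k L). }
    destruct (build_list E (S k) Hs (S k) (le_n _)) as [l Hl].
    assert (ND : NoDup (map r l)).
    { apply (nodup_map_transfer E); auto. rewrite Hl. apply seq_NoDup. }
    assert (IN : incl (map r l) (seq 0 k)).
    { intros a Ha. apply in_map_iff in Ha as [x [<- _]]. apply in_seq. specialize (Hlt x). lia. }
    pose proof (NoDup_incl_length ND IN).
    rewrite length_map, length_seq in H.
    assert (length l = S k).
    { rewrite <- (length_map E), Hl, length_seq. reflexivity. }
    lia.
Qed.

Lemma transfer (G H : Group) (X Y : Type) (actG : G -> X -> X) (actH : H -> Y -> Y) :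
  (forall S, ConAct G X actG S -> ConAct H Y actH S) ->
  forall m, (exists E, is_partition X m E) -> exists E, is_partition Y m E.
Proof.
  intros HC m [E [Hb Hs]].
  destruct (HC (Con G X actG [gone G] E)) as [gs [m' [E' [_ [_ Hiff]]]]].
  { exists [gone G], m, E. split; [discriminate|]. split; [split; auto|]. tauto. }
  exists E'. split.
  - intro y. assert (Hc : Con H Y actH gs E' (E' y :: map (fun g => E' (actH g y)) gs))
      by (exists y; reflexivity).
    apply Hiff in Hc. destruct Hc as [x Hx]. injection Hx as Hx _. rewrite Hx; auto.
  - intros k Hk. destruct (Hs k Hk) as [x Hx].
    assert (Hc : Con G X actG [gone G] E (E x :: [E (actG (gone G) x)]))
      by (exists x; reflexivity).
    apply Hiff in Hc. destruct Hc as [y Hy]. injection Hy as Hy _. exists y; congruence.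
Qed.

Section Count.
Variable G : Group.
Variable Sg : list G.

Fixpoint lv (n k : nat) : G :=
  match n with
  | 0 => match k with 0 => gone G | S i => nth i Sg (gone G) end
  | S n' =>
      match of_nat k with
      | (0, r) => lv n' r
      | (1, r) => match of_nat r with (a, b) => gmul G (lv n' a) (lv n' b) end
      | (_, r) => ginv G (lv n' r)
      end
  end.

Lemma lv_lift d n k : exists k', lv (d + n) k' = lv n k.
Proof.
  induction d; simpl.
  - exists k; reflexivity.
  - destruct IHd as [k' Hk']. exists (to_nat (0, k')).
    rewrite cancel_of_to. exact Hk'.
Qed.

Lemma lv_gen g : generated G Sg g -> exists n k, lv n k = g.
Proof.
  induction 1.
  - exists 0, 0; reflexivity.
  - destruct (In_nth _ _ (gone G) H) as [i [_ Hi]]. exists 0, (S i); exact Hi.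
  - destruct IHgenerated1 as [n1 [k1 H1]]; destruct IHgenerated2 as [n2 [k2 H2]].
    destruct (lv_lift n2 n1 k1) as [a1 Ha]. destruct (lv_lift n1 n2 k2) as [b1 Hb].
    rewrite Nat.add_comm in Hb.
    exists (S (n2 + n1)), (to_nat (1, to_nat (a1, b1))).
    cbn [lv]. rewrite !cancel_of_to. congruence.
  - destruct IHgenerated as [n [k Hk]]. exists (S n), (to_nat (2, k)).
    cbn [lv]. rewrite cancel_of_to. congruence.
Qed.

Definition enum (k : nat) : G := let (n, j) := of_nat k in lv n j.

Lemma enum_surj g : generated G Sg g -> exists k, enum k = g.
Proof.
  intro Hg. destruct (lv_gen g Hg) as [n [j Hj]]. exists (to_nat (n, j)).
  unfold enum. rewrite cancel_of_to. exact Hj.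
Qed.
End Count.

Lemma countable_X (G : Group) (X : Type) (actG : G -> X -> X) :
  finitely_generated G -> transitive G X actG ->
  (exists f : nat -> X, forall x, exists n, f n = x) \/ (X -> False).
Proof.
  intros [Sg HS] Ht.
  destruct (classic (exists x : X, True)) as [[x0 _]|Hn].
  - left. exists (fun k => actG (enum G Sg k) x0). intro y.
    destruct (Ht x0 y) as [g Hg]. destruct (enum_surj G Sg g (HS g)) as [k Hk].
    exists k. rewrite Hk; exact Hg.
  - right. intro x; apply Hn; exists x; auto.
Qed.

Theorem mainTheorem3 (G H : Group) (X Y : Type)
  (actG : G -> X -> X) (actH : H -> Y -> Y) :
  finitely_generated G -> finitely_generated H ->
  is_action G X actG -> is_action H Y actH ->
  transitive G X actG -> transitive H Y actH ->
  ConAct_eq G H X Y actG actH ->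
  same_card X Y.
Proof.
  intros fgG fgH _ _ tG tH Heq.
  destruct (r_exists X (countable_X G X actG fgG tG)) as [rX [iX dX]].
  destruct (r_exists Y (countable_X H Y actH fgH tH)) as [rY [iY dY]].
  assert (Im : forall k, (exists x, rX x = k) <-> (exists y, rY y = k)).
  { intro k. rewrite (char rX iX dX), (char rY iY dY). split.
    - apply (transfer G H X Y actG actH). intro S; apply Heq.
    - apply (transfer H G Y X actH actG). intro S; apply Heq. }
  assert (F : forall x, exists y, rY y = rX x) by (intro x; apply Im; eauto).
  assert (B : forall y, exists x, rX x = rY y) by (intro y; apply Im; eauto).
  exists (fun x => proj1_sig (constructive_indefinite_description _ (F x))).
  exists (fun y => proj1_sig (constructive_indefinite_description _ (B y))).
  split.
  - intro x. destruct (constructive_indefinite_description _ (F x)) as [y Hy]; simpl.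
    destruct (constructive_indefinite_description _ (B y)) as [x' Hx']; simpl.
    apply iX. congruence.
  - intro y. destruct (constructive_indefinite_description _ (B y)) as [x Hx]; simpl.
    destruct (constructive_indefinite_description _ (F x)) as [y' Hy']; simpl.
    apply iY. congruence.
Qed.
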